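(* Let $N \geq 1$ and $A \geq 0$ be integers, and suppose $A$ items are drawn uniformly at random with replacement from a sample of $N$ items (each draw independent and each item equally likely). Let $k$ be the number of distinct original items appearing among the $A$ draws, so that $$\mathbb{P}(k) = \frac{N^{\underline{k}}}{N^{A}} \left\{ {A \atop k} \right\}, \qquad k = 0,1,\dots,N.$$ Then for every integer $t \geq 0$, the $t$-th raw moment $\mu'_t = \mathbb{E}[k^t]$ satisfies $$\mu'_t = \sum_{k=0}^{N} k^t \frac{N^{\underline{k}}}{N^{A}} \left\{ {A \atop k} \right\} = \sum_{\substack{u,v,w \in \mathbb{N}_0 \\ u+v+w = t}} \binom{t}{u} (-1)^{v} \left\{ {v+w \atop v} \right\} N^{\underline{v}} (N-v)^{u} \Big(1 - \frac{v}{N}\Big)^{A}.$$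
   Context: $\mathbb{N}_0$ denotes the nonnegative integers. $N^{\underline{k}}$ is the falling factorial: $N^{\underline{k}} = N!/(N-k)!$ if $k \leq N$ and $0$ otherwise. $\left\{ {n \atop m} \right\}$ is the Stirling number of the second kind (the number of partitions of an $n$-element set into $m$ nonempty blocks), with $\left\{ {0 \atop 0} \right\} = 1$, $\left\{ {n \atop 0} \right\} = 0$ for $n > 0$, and $\left\{ {n \atop m} \right\} = 0$ for $m < 0$ or $m > n$. The convention $0^0 = 1$ is used. *)

(* Defs.v *)
From mathcomp Require Import all_boot all_order all_algebra.
Set Implicit Arguments. Unset Strict Implicit. Unset Printing Implicit Defensive.
Import GRing.Theory Num.Theory.

Definition stirling2 (n m : nat) : nat :=
  #|[set P : {set {set 'I_n}} | partition P [set: 'I_n] && (#|P| == m)]|.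

Definition ndistinct (N A : nat) (f : {ffun 'I_A -> 'I_N}) : nat :=
  #|f @: [set: 'I_A]|.

Local Open Scope ring_scope.

Definition raw_moment (N A t : nat) : rat :=
  (\sum_(f : {ffun 'I_A -> 'I_N}) ((ndistinct f) ^ t)%:R) / (N ^ A)%:R.

Definition probk (N A k : nat) : rat :=
  (N ^_ k)%:R / (N ^ A)%:R * (stirling2 A k)%:R.

(* Main.v *)
Require Import Defs.
From mathcomp Require Import all_boot all_order all_algebra.
From mathcomp Require Import ring zify.
Import GRing.Theory Num.Theory.
Section G.
Variables (n : nat) (T : finType).
Local Notation PF f := (preim_partition f [set: 'I_n]).

Lemma card_PF (f : {ffun 'I_n -> T}) : #|PF f| = #|f @: [set: 'I_n]|.
Proof.
have -> : PF f = (fun a => [set y | f y == a]) @: (f @: [set: 'I_n]).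
  rewrite /preim_partition /equivalence_partition -imset_comp.
  apply: eq_imset => x /=; apply/setP => y; rewrite !inE eq_sym.
  by [].
apply: card_in_imset => a b /imsetP[x _ ->] /imsetP[z _ ->] E.
have : x \in [set y | f y == f x] by rewrite inE.
by rewrite E inE => /eqP.
Qed.

Lemma card_fib (P : {set {set 'I_n}}) : partition P [set: 'I_n] ->
  #|[set f : {ffun 'I_n -> T} | PF f == P]| = #|T| ^_ #|P|.
Proof.
move=> partP; have [/eqP covP tiP n0P] := and3P partP.
have memP x : pblock P x \in P by apply: pblock_mem; rewrite covP inE.
pose K := {B : {set 'I_n} | B \in P}.
pose Phi (h : {ffun K -> T}) : {ffun 'I_n -> T} :=
  [ffun x => h (exist _ (pblock P x) (memP x))].
have nonemp (k : K) : exists x, x \in val k.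
  apply/set0Pn; apply: contraNneq n0P => <-; exact: (valP k).
have pbk (k : K) x : x \in val k -> exist _ (pblock P x) (memP x) = k.
  by move=> xk; apply: val_inj => /=; apply: def_pblock => //; exact: valP.
have Phi_inj : injective Phi.
  move=> h1 h2 E; apply/ffunP => k; have [x xk] := nonemp k.
  by move/ffunP: E => /(_ x); rewrite !ffunE (pbk k x xk).
have cK : #|{: K}| = #|P| by rewrite card_sig.
rewrite -cK -card_inj_ffuns -(card_imset _ Phi_inj).
apply: eq_card => f; rewrite inE; apply/idP/imsetP.
- move/eqP => Pf.
  have key x y : (y \in pblock P x) = (f x == f y).
    rewrite -Pf; apply: pblock_equivalence_partition; rewrite ?inE //.
    by split => // /eqP ->.
  exists [ffun k : K => f (xchoose (nonemp k))].
    rewrite inE; apply/injectiveP => k1 k2; rewrite !ffunE => E.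
    have r1 := xchooseP (nonemp k1); have r2 := xchooseP (nonemp k2).
    rewrite -(pbk _ _ r1) -(pbk _ _ r2); apply: val_inj => /=.
    apply/esym/same_pblock => //; by rewrite key E.
  apply/ffunP => x; rewrite !ffunE /=; apply/eqP; rewrite -key.
  have H := xchooseP (nonemp (exist (fun B => B \in P) _ (memP x))). exact H.
- case=> h; rewrite inE => /injectiveP hinj ->.
  rewrite -{1}(preim_partition_pblock partP).
  apply/eqP; rewrite /preim_partition /equivalence_partition.
  apply: eq_imset => x; apply/setP => y; rewrite !inE !ffunE.
  rewrite (inj_eq hinj); apply/eqP/eqP => [E|E]; first by case: E.
  by apply: val_inj.
Qed.

Lemma countG k :
  #|[set f : {ffun 'I_n -> T} | #|f @: [set: 'I_n]| == k]| = (#|T| ^_ k * stirling2 n k)%N.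
Proof.
rewrite -sum1_card.
rewrite (partition_big (fun f : {ffun 'I_n -> T} => PF f)
  (fun P => partition P [set: 'I_n] && (#|P| == k))) /=; last first.
  by move=> f; rewrite inE preim_partitionP card_PF.
rewrite /stirling2 mulnC -sum_nat_const.
apply: eq_big => P; first by rewrite inE.
move=> /andP[pP /eqP cP]; rewrite -cP -card_fib // -sum1_card.
apply: eq_bigl => f; rewrite !inE -card_PF.
by case: (PF f =P P) => [->|]; rewrite ?eqxx // andbF.
Qed.
End G.

Local Open Scope ring_scope.

Lemma fiber (I : finType) (P : pred I) (g : I -> nat) (n : nat) (F : nat -> rat) :
  (forall i, P i -> g i <= n)%N ->
  \sum_(i | P i) F (g i) =
  \sum_(0 <= k < n.+1) F k *+ #|[set i | P i && (g i == k)]|.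
Proof.
move=> Hg; rewrite big_mkord.
rewrite (partition_big (fun i => (inord (g i) : 'I_n.+1)) xpredT) //=.
apply: eq_bigr => k _.
transitivity (\sum_(i in [set i | P i && (g i == k)]) F k); last by rewrite sumr_const.
apply: eq_big => i.
  rewrite inE; case Pi: (P i) => //=.
  by rewrite -val_eqE /= inordK // ltnS; apply: Hg.
by case/andP => Pi; rewrite -val_eqE /= inordK ?ltnS ?Hg // => /eqP ->.
Qed.

Lemma SC (T : finType) (Z : {set T}) n (F : nat -> rat) : #|Z| = n ->
  \sum_(Y : {set T} | Y \subset Z) F #|Y| = \sum_(0 <= k < n.+1) F k *+ 'C(n, k).
Proof.
move=> cZ; rewrite (@fiber _ _ _ n); last first.
  by move=> Y YZ; rewrite -cZ subset_leq_card.
by apply: eq_bigr => k _; rewrite cards_draws cZ.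
Qed.

Lemma E (T : finType) (Z : {set T}) :
  \sum_(Y : {set T} | Y \subset Z) (-1) ^+ #|Y| = (Z == set0)%:R :> rat.
Proof.
rewrite (@SC _ Z #|Z| (fun k => (-1) ^+ k) erefl) -cards_eq0.
have := exprDn (1 : rat) (-1) #|Z|; rewrite subrr expr0n => ->.
rewrite big_mkord; apply: eq_bigr => i _; by rewrite expr1n mul1r.
Qed.

Lemma cardR (I : finType) (A : {pred I}) : (#|A|%:R : rat) = \sum_i (i \in A)%:R.
Proof.
rewrite -sumr_const big_mkcond /=; apply: eq_bigr => i _.
by case: (i \in A).
Qed.

Lemma IE (D T : finType) (X : {set T}) :
  (#|[set f : {ffun D -> T} | X \subset f @: setT]|%:R : rat) =
  \sum_(Y : {set T} | Y \subset X) (-1) ^+ #|Y| * ((#|T| - #|Y|) ^ #|D|)%:R.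
Proof.
transitivity (\sum_(Y : {set T} | Y \subset X) \sum_(f : {ffun D -> T})
     (-1) ^+ #|Y| * (f \in ffun_on (mem (~: Y)))%:R : rat); last first.
  apply: eq_bigr => Y _; rewrite -mulr_sumr; congr (_ * _).
  have -> : (#|T| - #|Y| = #|~: Y|)%N by rewrite [RHS]cardsCs setCK.
  by rewrite -card_ffun_on cardR; apply: eq_bigr => f _; rewrite inE.
rewrite exchange_big /= cardR; apply: eq_bigr => f _.
transitivity (\sum_(Y : {set T} | Y \subset X :\: f @: setT) (-1) ^+ #|Y| : rat).
  by rewrite E setD_eq0 inE.
rewrite [RHS]big_mkcond [LHS]big_mkcond; apply: eq_bigr => Y _.
have -> : (Y \subset X :\: f @: setT) = (Y \subset X) && (f \in ffun_on (mem (~: Y))).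
  rewrite setDE subsetI; congr (_ && _).
  apply/idP/ffun_onP => [H x | H].
    rewrite inE; apply/negP => fY; have := subsetP H _ fY; by rewrite inE imset_f.
  apply/subsetP => y yY; rewrite inE; apply/imsetP => [[x _ fx]].
  by have := H x; rewrite inE -fx yY.
by case: (Y \subset X); case: (f \in _) => /=; rewrite ?mulr1 ?mulr0.
Qed.

Lemma Surj m v :
  \sum_(0 <= j < v.+1) ((-1) ^+ j * ((v - j) ^ m)%:R) *+ 'C(v, j) =
  ((v`! * stirling2 m v)%N)%:R :> rat.
Proof.
rewrite -ffactnn -(card_ord v) -countG.
have := @IE 'I_m 'I_v setT; rewrite (@SC _ _ v (fun k => (-1) ^+ k * ((#|'I_v| - k) ^ #|'I_m|)%:R)) ?cardsT ?card_ord //.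
move <-; congr (_%:R); apply: eq_card => f; rewrite !inE subTset.
rewrite eqEcard subsetT /= cardsT card_ord.
have := max_card (mem [set f x | x in [set: 'I_m]]); rewrite card_ord => h.
by rewrite eq_sym eqn_leq h andbT.
Qed.

Lemma stir0 m v : (m < v)%N -> stirling2 m v = 0%N.
Proof.
move=> mv; have := countG m 'I_v v; rewrite card_ord ffactnn.
rewrite eq_card0; last first.
  move=> f; rewrite !inE; apply/negbTE; rewrite neq_ltn.
  by rewrite (leq_ltn_trans (leq_imset_card _ _)) // cardsT card_ord.
move/esym/eqP; rewrite muln_eq0 (gtn_eqF (fact_gt0 v)) /=.
by move/eqP.
Qed.

Lemma ext (F : nat -> rat) n m : (n <= m)%N ->
  (forall i, (n <= i < m)%N -> F i = 0) ->
  \sum_(0 <= i < n) F i = \sum_(0 <= i < m) F i.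
Proof.
move=> nm H; rewrite [RHS](@big_cat_nat _ _ _ n) ?leq0n //=.
rewrite (_ : \sum_(n <= i < m) F i = 0) ?addr0 //.
by rewrite big_nat_cond big1 // => i /andP[hi _]; apply: H.
Qed.

Lemma He (N t v : nat) : (v <= N)%N ->
  \sum_(0 <= j < v.+1) ((-1) ^+ j * ((N - j) ^ t)%:R) *+ 'C(v, j) =
  \sum_(0 <= u < t.+1) ('C(t, u))%:R * ((N - v)%:R) ^+ u
       * ((v`! * stirling2 (t - u) v)%N)%:R :> rat.
Proof.
move=> vN.
under [RHS]eq_bigr => u _ do rewrite -Surj big_distrr /=.
rewrite exchange_big_nat /=.
apply: eq_big_nat => j /andP[_ hj].
have -> : (N - j = (v - j) + (N - v))%N by rewrite ltnS in hj; lia.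
rewrite natrX natrD exprDn big_mkord.
rewrite big_distrr /= -sumrMnl; apply: eq_bigr => u _.
rewrite natrX; ring.
Qed.

Lemma Xid (N A t : nat) :
  \sum_(f : {ffun 'I_A -> 'I_N}) ((#|f @: [set: 'I_A]| ^ t)%N%:R : rat) =
  \sum_(0 <= k < N.+1) (k ^ t)%:R * ((N ^_ k * stirling2 A k)%N)%:R.
Proof.
rewrite (@fiber _ xpredT (fun f : {ffun 'I_A -> 'I_N} => #|f @: [set: 'I_A]|) N (fun k => (k ^ t)%:R)); last first.
  by move=> f _; have := max_card (mem (f @: [set: 'I_A])); rewrite card_ord.
apply: eq_bigr => k _; rewrite mulr_natr; congr (_ *+ _).
have := countG A 'I_N k; rewrite card_ord => <-.
by apply: eq_card => f; rewrite !inE.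
Qed.

Definition HH (N t v : nat) : rat :=
  \sum_(0 <= j < v.+1) ((-1) ^+ j * ((N - j) ^ t)%:R) *+ 'C(v, j).

Lemma Yid (N A t : nat) :
  \sum_(f : {ffun 'I_A -> 'I_N}) ((#|f @: [set: 'I_A]| ^ t)%N%:R : rat) =
  \sum_(0 <= v < N.+1) ((-1) ^+ v * ((N - v) ^ A)%:R * HH N t v) *+ 'C(N, v).
Proof.
transitivity (\sum_(f : {ffun 'I_A -> 'I_N}) \sum_(g : {ffun 'I_t -> 'I_N})
   ((g @: [set: 'I_t]) \subset (f @: [set: 'I_A]))%:R : rat).
  apply: eq_bigr => f _; rewrite -{1}(card_ord t) -card_ffun_on cardR.
  apply: eq_bigr => g _; congr (_%:R); congr (nat_of_bool _); apply/idP/idP.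
    by move/ffun_onP => H; apply/subsetP => y /imsetP[x _ ->]; apply: H.
  by move/subsetP => H; apply/ffun_onP => x; apply: H; rewrite imset_f.
rewrite exchange_big /=.
transitivity (\sum_(g : {ffun 'I_t -> 'I_N}) \sum_(Y : {set 'I_N})
   (Y \subset g @: [set: 'I_t])%:R * ((-1) ^+ #|Y| * ((N - #|Y|) ^ A)%:R) : rat).
  apply: eq_bigr => g _.
  transitivity (#|[set f : {ffun 'I_A -> 'I_N} | g @: [set: 'I_t] \subset f @: setT]|%:R : rat).
    by rewrite cardR; apply: eq_bigr => f _; rewrite inE.
  rewrite IE card_ord card_ord big_mkcond /=; apply: eq_bigr => Y _.
  by case: (Y \subset _); rewrite ?mul1r ?mul0r.
rewrite exchange_big /=.
transitivity (\sum_(Y : {set 'I_N} | Y \subset setT)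
   ((-1) ^+ #|Y| * ((N - #|Y|) ^ A)%:R * HH N t #|Y|)).
  apply: eq_big => [Y|Y _]; first by rewrite subsetT.
  rewrite -big_distrl /= mulrC; congr (_ * _).
  transitivity (#|[set g : {ffun 'I_t -> 'I_N} | Y \subset g @: setT]|%:R : rat).
    by rewrite cardR; apply: eq_bigr => g _; rewrite inE.
  rewrite IE card_ord card_ord /HH.
  exact: (@SC _ Y #|Y| (fun k => (-1) ^+ k * ((N - k) ^ t)%:R)).
by rewrite (@SC _ setT N (fun k => (-1) ^+ k * ((N - k) ^ A)%:R * HH N t k)) // cardsT card_ord.
Qed.

Definition Phi (N A t u v : nat) : rat :=
  ('C(t, u))%:R * (-1) ^+ v * (stirling2 (t - u) v)%:R * (N ^_ v)%:R
       * (N%:R - v%:R : rat) ^+ u * (1 - v%:R / N%:R) ^+ A.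

Lemma Fin (N A t : nat) : (1 <= N)%N ->
  (\sum_(0 <= v < N.+1) ((-1) ^+ v * ((N - v) ^ A)%:R * HH N t v) *+ 'C(N, v))
     / (N ^ A)%:R =
  \sum_(0 <= u < t.+1) \sum_(0 <= v < (t - u).+1)
     let w := (t - u - v)%N in
     ('C(t, u))%:R * (-1) ^+ v * (stirling2 (v + w) v)%:R * (N ^_ v)%:R
       * (N%:R - v%:R : rat) ^+ u * (1 - v%:R / N%:R) ^+ A.
Proof.
move=> N1.
transitivity (\sum_(0 <= u < t.+1) \sum_(0 <= v < (N + t).+1) Phi N A t u v); last first.
  apply: eq_big_nat => u /andP[_ hu].
  transitivity (\sum_(0 <= v < (t - u).+1) Phi N A t u v).
    symmetry; apply: ext; first by rewrite ltnS; lia.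
    by move=> i /andP[hi _]; rewrite /Phi stir0 ?mulr0 ?mul0r //.
  apply: eq_big_nat => v /andP[_ hv]; rewrite /Phi /=.
  by rewrite subnKC // -ltnS.
rewrite exchange_big_nat /=.
rewrite -(@ext _ N.+1 (N + t).+1); first last.
- move=> v /andP[hv _]; apply: big1 => u _.
  by rewrite /Phi ffact_small ?mulr0 ?mul0r.
- by rewrite ltnS leq_addr.
rewrite mulr_suml; apply: eq_big_nat => v /andP[_ hv]; rewrite ltnS in hv.
rewrite /HH He //.
rewrite big_distrr /= -sumrMnl mulr_suml; apply: eq_bigr => u _; rewrite /Phi.
have N0 : (N%:R : rat) != 0 by rewrite pnatr_eq0 -lt0n.
have -> : 1 - v%:R / N%:R = (N - v)%:R / (N%:R : rat).
  by rewrite natrB // mulrBl divff.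
rewrite expr_div_n -bin_ffact !natrM -natrB // !natrX.
ring.
Qed.

Lemma part1 (N A t : nat) :
  raw_moment N A t = \sum_(0 <= k < N.+1) (k ^ t)%:R * probk N A k.
Proof.
rewrite /raw_moment /ndistinct Xid mulr_suml; apply: eq_bigr => k _.
rewrite /probk natrM; ring.
Qed.

Theorem mainTheorem1 (N A t : nat) (hN : (1 <= N)%N) :
  raw_moment N A t = \sum_(0 <= k < N.+1) (k ^ t)%:R * probk N A k /\
  \sum_(0 <= k < N.+1) (k ^ t)%:R * probk N A k =
  \sum_(0 <= u < t.+1) \sum_(0 <= v < (t - u).+1)
     let w := (t - u - v)%N in
     ('C(t, u))%:R * (-1) ^+ v * (stirling2 (v + w) v)%:R * (N ^_ v)%:R
       * (N%:R - v%:R : rat) ^+ u * (1 - v%:R / N%:R) ^+ A.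
Proof.
split; first exact: part1.
by rewrite -part1 /raw_moment /ndistinct Yid Fin.
Qed.
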